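(* A TEFX allocation need not exist, for goods or for chores, even when there are $n=2$ agents with identical valuations and only two types of items. That is, there exists an instance with two agents, identical additive valuations, all items goods, items of two types, and no TEFX allocation; and likewise such an instance with all items chores.
   Context: Items $o_1,\dots,o_m$ arrive one per round in this order; agents have additive valuations; in the goods case $v_i(o)\ge 0$, in the chores case $v_i(o)\le 0$ for all agents and items. An allocation $\mathcal{A}=(A_1,\dots,A_n)$ partitions the items; $\mathcal{A}^t$ is its restriction to $o_1,\dots,o_t$. An allocation $(B_1,\dots,B_n)$ is EFX if for all $i,j$ and every good $g\in B_j$, $v_i(B_i)\ge v_i(B_j\setminus\{g\})$ (goods), resp. for every chore $c\in B_i$, $v_i(B_i\setminus\{c\})\ge v_i(B_j)$ (chores). $\mathcal{A}$ is TEFX if $\mathcal{A}^t$ is EFX for every $t$. ''Two types of items'' means the items can be partitioned into two sets $S_1,S_2$ such that every agent values all items within the same set equally. *)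

(* Defs.v *)
From mathcomp Require Import all_boot all_order all_algebra.
Set Implicit Arguments. Unset Strict Implicit. Unset Printing Implicit Defensive.
Import Order.TTheory GRing.Theory Num.Theory.
Local Open Scope ring_scope.

(* Items o_1,...,o_m are the ordinals 'I_m, arriving in index order
   (item k arrives in round k+1). *)

Definition bval (n m : nat) (v : 'I_n -> 'I_m -> rat) (i : 'I_n)
  (B : {set 'I_m}) : rat := \sum_(o in B) v i o.

Definition allocation (n m : nat) := 'I_m -> 'I_n.

Definition bundle_upto (n m : nat) (a : allocation n m) (t : nat) (i : 'I_n)
  : {set 'I_m} := [set o : 'I_m | (nat_of_ord o < t)%N && (a o == i)].

Definition EFX_goods (n m : nat) (v : 'I_n -> 'I_m -> rat)
  (B : 'I_n -> {set 'I_m}) : Prop :=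
  forall i j : 'I_n, forall g : 'I_m, g \in B j ->
    bval v i (B j :\ g) <= bval v i (B i).

Definition EFX_chores (n m : nat) (v : 'I_n -> 'I_m -> rat)
  (B : 'I_n -> {set 'I_m}) : Prop :=
  forall i j : 'I_n, forall c : 'I_m, c \in B i ->
    bval v i (B j) <= bval v i (B i :\ c).

Definition TEFX_goods (n m : nat) (v : 'I_n -> 'I_m -> rat)
  (a : allocation n m) : Prop :=
  forall t : nat, (t <= m)%N -> EFX_goods v (bundle_upto a t).

Definition TEFX_chores (n m : nat) (v : 'I_n -> 'I_m -> rat)
  (a : allocation n m) : Prop :=
  forall t : nat, (t <= m)%N -> EFX_chores v (bundle_upto a t).

Definition identical_vals (n m : nat) (v : 'I_n -> 'I_m -> rat) : Prop :=
  forall i j : 'I_n, v i = v j.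

Definition goods_instance (n m : nat) (v : 'I_n -> 'I_m -> rat) : Prop :=
  forall i o, 0 <= v i o.

Definition chores_instance (n m : nat) (v : 'I_n -> 'I_m -> rat) : Prop :=
  forall i o, v i o <= 0.

Definition two_types (n m : nat) (v : 'I_n -> 'I_m -> rat) : Prop :=
  exists S : {set 'I_m},
    forall i : 'I_n, forall o o' : 'I_m,
      (o \in S) = (o' \in S) -> v i o = v i o'.

(* Main.v *)
Require Import Defs.
From mathcomp Require Import all_boot all_order all_algebra.
From mathcomp Require Import lra.
Set Implicit Arguments. Unset Strict Implicit. Unset Printing Implicit Defensive.
Import Order.TTheory GRing.Theory Num.Theory.
Local Open Scope ring_scope.

Definition o0 : 'I_3 := @Ordinal 3 0 isT.
Definition o1 : 'I_3 := @Ordinal 3 1 isT.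
Definition o2 : 'I_3 := @Ordinal 3 2 isT.

Lemma sum3 (F : 'I_3 -> rat) : \sum_(o < 3) F o = F o0 + F o1 + F o2.
Proof.
rewrite !big_ord_recl big_ord0 addr0 addrA.
by congr (F _ + F _ + F _); apply: val_inj.
Qed.

Lemma bval3 (w : 'I_2 -> 'I_3 -> rat) i (B : {set 'I_3}) :
  bval w i B = (if o0 \in B then w i o0 else 0) + (if o1 \in B then w i o1 else 0)
             + (if o2 \in B then w i o2 else 0).
Proof. by rewrite /bval big_mkcond /= sum3. Qed.

Lemma I2_cases (x : 'I_2) : x = ord0 \/ x = ord_max.
Proof. case: x => [[|[|k]] Hk]; [left|right|by []]; exact: val_inj. Qed.

Definition vg (s : rat) : 'I_2 -> 'I_3 -> rat :=
  fun _ o => if nat_of_ord o == 2%N then s * 2%:R else s.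

Lemma vg_two s : two_types (vg s).
Proof.
exists [set o : 'I_3 | nat_of_ord o == 2%N] => i o o'.
by rewrite !inE /vg => ->.
Qed.

Lemma n01 : (ord0 == ord_max :> 'I_2) = false. Proof. by []. Qed.
Lemma n10 : (ord_max == ord0 :> 'I_2) = false. Proof. by []. Qed.
Ltac clean_imp := repeat match goal with
  | |- (true -> _) -> _ => move=> /(_ isT) ?
  | |- (false -> _) -> _ => move=> _
  | |- False -> _ => by []
  end.

Theorem proposition1 :
  (exists (m : nat) (v : 'I_2 -> 'I_m -> rat),
      identical_vals v /\ goods_instance v /\ two_types v /\
      forall a : allocation 2 m, ~ TEFX_goods v a)
  /\
  (exists (m : nat) (v : 'I_2 -> 'I_m -> rat),
      identical_vals v /\ chores_instance v /\ two_types v /\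
      forall a : allocation 2 m, ~ TEFX_chores v a).
Proof.
split.
- exists 3%N, (vg 1); split; first by [].
  split; first by move=> i o; rewrite /vg; case: ifP.
  split; first exact: vg_two.
  move=> a H.
  have H2 := H 2%N isT; have H3 := H 3%N isT.
  have E2 := H2 ord0 ord_max; have E2' := H2 ord_max ord0.
  have E3 := H3 ord0 ord_max; have E3' := H3 ord_max ord0.
  move: (E2 o0) (E2 o1) (E2' o0) (E2' o1) (E3 o0) (E3 o1) (E3 o2) (E3' o0) (E3' o1) (E3' o2).
  rewrite !bval3 /bundle_upto !inE /=.
  case: (I2_cases (a o0)) => ->; case: (I2_cases (a o1)) => ->;
  case: (I2_cases (a o2)) => -> /=; rewrite /vg /=; rewrite ?eqxx ?n01 ?n10; clean_imp; lra.
- exists 3%N, (vg (-1)); split; first by [].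
  split; first by move=> i o; rewrite /vg; case: ifP => _ //; lra.
  split; first exact: vg_two.
  move=> a H.
  have H2 := H 2%N isT; have H3 := H 3%N isT.
  have E2 := H2 ord0 ord_max; have E2' := H2 ord_max ord0.
  have E3 := H3 ord0 ord_max; have E3' := H3 ord_max ord0.
  move: (E2 o0) (E2 o1) (E2' o0) (E2' o1) (E3 o0) (E3 o1) (E3 o2) (E3' o0) (E3' o1) (E3' o2).
  rewrite !bval3 /bundle_upto !inE /=.
  case: (I2_cases (a o0)) => ->; case: (I2_cases (a o1)) => ->;
  case: (I2_cases (a o2)) => -> /=; rewrite /vg /=; rewrite ?eqxx ?n01 ?n10; clean_imp; lra.
Qed.
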